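(* Let $\delta=(\delta_1,\dots,\delta_n)\in\{\mathsf{A},\mathsf{D}\}^n$ and let $I=(I_1,\dots,I_n)$ be an integer vector with $I_i\in[0,\tfrac{i(i-1)}{2}]$ for each $i$. If $\mathbf{i}\in R(w_0^{(n+1)})$ satisfies $\mathbf{i}\sim \mathbf{i}_\delta(I)$, then $\mathrm{ind}_\delta(\mathbf{i})=I$.
   Context: Let $R(w_0^{(n+1)})$ denote the set of reduced words $\mathbf{i}=(i_1,\dots,i_{\bar n})\in[n]^{\bar n}$ of the longest element $w_0^{(n+1)}$ of the symmetric group $\mathfrak{S}_{n+1}$ (generated by simple transpositions $s_1,\dots,s_n$), where $\bar n=n(n+1)/2$. A 2-move exchanges two consecutive letters $i,j$ with $|i-j|>1$; write $\mathbf{i}\sim\mathbf{i}'$ if $\mathbf{i}$ and $\mathbf{i}'$ are related by a sequence of 2-moves. Put $\mathsf{D}_n=(n,n-1,\dots,1)$ and $\mathsf{A}_n=(1,2,\dots,n)$. Every $\mathbf{i}\in R(w_0^{(n+1)})$ satisfies $\mathbf{i}\sim\mathbf{i}^-_{\mathsf{D}}\,\mathsf{D}_n\,\mathbf{i}^+_{\mathsf{D}}\sim\mathbf{i}^-_{\mathsf{A}}\,\mathsf{A}_n\,\mathbf{i}^+_{\mathsf{A}}$ for some words $\mathbf{i}^\pm_{\mathsf{D}},\mathbf{i}^\pm_{\mathsf{A}}$ (chosen minimal, i.e. using as few 2-moves as possible); the $\mathsf{D}$-index and $\mathsf{A}$-index are $\mathrm{ind}_{\mathsf{D}}(\mathbf{i})=|\mathbf{i}^+_{\mathsf{D}}|$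 and $\mathrm{ind}_{\mathsf{A}}(\mathbf{i})=|\mathbf{i}^+_{\mathsf{A}}|$. For a word $\mathbf{j}=(j_1,\dots,j_k)$ write $\mathbf{j}\pm1=(j_1\pm1,\dots,j_k\pm1)$. The contractions are $C_{\mathsf{D}}(\mathbf{i})=\mathbf{i}^-_{\mathsf{D}}(\mathbf{i}^+_{\mathsf{D}}-1)\in R(w_0^{(n)})$ and $C_{\mathsf{A}}(\mathbf{i})=(\mathbf{i}^-_{\mathsf{A}}-1)\mathbf{i}^+_{\mathsf{A}}\in R(w_0^{(n)})$. For $s\in[0,\bar n]$, writing $\mathbf{i}=\mathbf{i}^-(s)\,\mathbf{i}^+(s)$ with $|\mathbf{i}^+(s)|=s$, the extensions are $E_{\mathsf{D}}(s)(\mathbf{i})=\mathbf{i}^-(s)\,\mathsf{D}_{n+1}\,(\mathbf{i}^+(s)+1)$ and $E_{\mathsf{A}}(s)(\mathbf{i})=(\mathbf{i}^-(s)+1)\,\mathsf{A}_{n+1}\,\mathbf{i}^+(s)$, both in $R(w_0^{(n+2)})$. For $\delta=(\delta_1,\dots,\delta_n)\in\{\mathsf{A},\mathsf{D}\}^n$ and $I$ as in the claim, $\mathbf{i}_\delta(I)=(E_{\delta_n}(I_n)\circ\cdots\circ E_{\delta_1}(I_1))(\emptyset)\in R(w_0^{(n+1)})$. The $\delta$-index of $\mathbf{i}$ is $\mathrm{ind}_\delta(\mathbf{i})=(I_1,\dots,I_n)$ with $I_n=\mathrm{ind}_{\delta_n}(\mathbf{i})$, $I_{n-1}=\mathrm{ind}_{\delta_{n-1}}(C_{\delta_n}(\mathbf{i}))$,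 …, $I_1=\mathrm{ind}_{\delta_1}(C_{\delta_2}\circ\cdots\circ C_{\delta_n}(\mathbf{i}))$. *)

(* Defs.v *)
From mathcomp Require Import all_boot.
Set Implicit Arguments. Unset Strict Implicit. Unset Printing Implicit Defensive.

(* Words are sequences of natural numbers; letter a stands for s_a. *)

Definition swapn (a x : nat) : nat :=
  if x == a then a.+1 else if x == a.+1 then a else x.

Definition word_perm (w : seq nat) : nat -> nat :=
  foldr (fun a f => fun x => swapn a (f x)) id w.

Definition letters_in (n : nat) (w : seq nat) : bool :=
  all (fun a => (0 < a) && (a <= n)) w.

Definition same_perm (n : nat) (w w' : seq nat) : Prop :=
  forall x, 1 <= x <= n.+1 -> word_perm w x = word_perm w' x.

(** w \in R(w_0^{(n+1)}) : w is a reduced word (no word over [n] representing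
    the same permutation is shorter) and represents the longest element
    w_0 : x |-> n+2-x of S_{n+1}. *)
Definition reduced_w0 (n : nat) (w : seq nat) : Prop :=
  [/\ letters_in n w,
      (forall x, 1 <= x <= n.+1 -> word_perm w x = n.+2 - x) &
      (forall w', letters_in n w' -> same_perm n w' w -> size w <= size w')].

Definition two_move (u v : seq nat) : Prop :=
  exists a b x y, [/\ u = a ++ [:: x; y] ++ b, v = a ++ [:: y; x] ++ b &
                      (y.+1 < x) || (x.+1 < y)].

Inductive moves : nat -> seq nat -> seq nat -> Prop :=
| moves0 u : moves 0 u u
| movesS k u v w : two_move u v -> moves k v w -> moves k.+1 u w.

Definition two_equiv (u v : seq nat) : Prop := exists k, moves k u v.

Inductive AD := LetA | LetD.

Definition Dword (n : nat) : seq nat := rev (iota 1 n).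
Definition Aword (n : nat) : seq nat := iota 1 n.
Definition pat (d : AD) (n : nat) : seq nat :=
  match d with LetA => Aword n | LetD => Dword n end.

Definition shiftup (w : seq nat) : seq nat := map S w.
Definition shiftdown (w : seq nat) : seq nat := map predn w.

Definition min_decomp (d : AD) (n : nat) (i l r : seq nat) : Prop :=
  exists k, moves k i (l ++ pat d n ++ r) /\
    (forall l' r' k', moves k' i (l' ++ pat d n ++ r') -> k <= k').

(** Contractions C_D(i) = i^- (i^+ - 1) and C_A(i) = (i^- - 1) i^+. *)
Definition contract (d : AD) (l r : seq nat) : seq nat :=
  match d with
  | LetD => l ++ shiftdown r
  | LetA => shiftdown l ++ r
  end.

(** [ind_rev ds Is i] : with ds = rev delta and Is = rev I, the
    delta-index of i is I (for a choice of minimal decompositions at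
    every stage).  The empty word is the only element of R(w_0^{(1)}). *)
Fixpoint ind_rev (ds : seq AD) (Is : seq nat) (i : seq nat) : Prop :=
  match ds, Is with
  | [::], [::] => i = [::]
  | d :: ds', k :: Is' =>
      exists l r, [/\ min_decomp d (size ds) i l r, size r = k &
                      ind_rev ds' Is' (contract d l r)]
  | _, _ => False
  end.

Definition ind_delta (delta : seq AD) (I : seq nat) (i : seq nat) : Prop :=
  ind_rev (rev delta) (rev I) i.

Definition ext (d : AD) (s k : nat) (w : seq nat) : seq nat :=
  let wm := take (size w - s) w in
  let wp := drop (size w - s) w in
  match d with
  | LetD => wm ++ Dword k ++ shiftup wp
  | LetA => shiftup wm ++ Aword k ++ wp
  end.

Fixpoint iword_aux (k : nat) (ds : seq AD) (Is : seq nat) (w : seq nat)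
  : seq nat :=
  match ds, Is with
  | d :: ds', s :: Is' => iword_aux k.+1 ds' Is' (ext d s k w)
  | _, _ => w
  end.

(** i_delta(I) = (E_{delta_n}(I_n) o ... o E_{delta_1}(I_1))(empty). *)
Definition iword (delta : seq AD) (I : seq nat) : seq nat :=
  iword_aux 1 delta I [::].

(* Main.v *)
Require Import Defs.
From Stdlib Require Import Classical.
From mathcomp Require Import all_boot zify.
Set Implicit Arguments. Unset Strict Implicit. Unset Printing Implicit Defensive.

Definition pc (c : nat) := fun z : nat => (z == c) || (z == c.+1).
Definition filt c (s : seq nat) := filter (pc c) s.
Definition PE u v := forall c, filt c u = filt c v.

Lemma moves_trans k m u v w : moves k u v -> moves m v w -> moves (k + m) u w.
Proof.
elim=> [u0|k' u0 v0 w0 t _ IH] H //.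
by rewrite addSn; apply: movesS t (IH H).
Qed.

Lemma two_move_sym u v : two_move u v -> two_move v u.
Proof.
case=> [a [b [x [y [-> -> H]]]]]; exists a, b, y, x; split => //.
by rewrite orbC.
Qed.

Lemma moves_sym k u v : moves k u v -> moves k v u.
Proof.
elim=> [u0|k' u0 v0 w0 t _ IH]; first exact: moves0.
rewrite -addn1; apply: moves_trans IH _.
apply: movesS (two_move_sym t) (moves0 _).
Qed.

Lemma moves_cons x k u v : moves k u v -> moves k (x :: u) (x :: v).
Proof.
elim=> [u0|k' u0 v0 w0 t _ IH]; first exact: moves0.
apply: movesS IH.
case: t => [a [b [x1 [y1 [-> -> H]]]]]; by exists (x :: a), b, x1, y1.
Qed.

Lemma moves_shift x v1 v2 :
  (forall y, y \in v1 -> (y.+1 < x) || (x.+1 < y)) ->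
  moves (size v1) (v1 ++ x :: v2) (x :: v1 ++ v2).
Proof.
elim: v1 => [|y v1 IH] H /=; first exact: moves0.
have H1 : moves (size v1) (y :: v1 ++ x :: v2) (y :: x :: v1 ++ v2).
  by apply: moves_cons; apply: IH => z Hz; apply: H; rewrite inE Hz orbT.
rewrite -addn1; apply: moves_trans H1 _.
apply: movesS (moves0 _).
exists [::], (v1 ++ v2), y, x; split => //.
by have := H y; rewrite inE eqxx => /(_ isT); rewrite orbC.
Qed.

Lemma two_move_PE u v : two_move u v -> PE u v.
Proof.
case=> [a [b [x [y [-> -> H]]]]] c; rewrite /filt !filter_cat /=.
congr (_ ++ _).
have : ~~ (pc c x && pc c y) by rewrite /pc; apply/negP; case/andP => /orP[] /eqP Hx /orP[] /eqP Hy; lia.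
by case: (pc c x); case: (pc c y).
Qed.

Lemma moves_PE k u v : moves k u v -> PE u v.
Proof.
elim=> [u0|k' u0 v0 w0 t _ IH] c //.
by rewrite (two_move_PE t).
Qed.

Lemma split_first (x : nat) v : x \in v -> exists v1 v2, v = v1 ++ x :: v2 /\ x \notin v1.
Proof.
elim: v => [|y v IH] //; rewrite inE; case: (eqVneq x y) => [<- _|nxy /= /IH [v1 [v2 [-> H]]]].
  by exists [::], v.
by exists (y :: v1), v2; rewrite inE negb_or nxy.
Qed.

Lemma filt_nil c s : filt c s = [::] -> forall y, y \in s -> ~~ pc c y.
Proof.
elim: s => [|z s IH] //= H y; rewrite inE; move: H; rewrite /filt /=.
case E: (pc c z) => // H /orP [/eqP ->|]; first by rewrite E.
by apply: IH.
Qed.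

Lemma filt_head c s x t : filt c s = x :: t -> x \in s.
Proof. move=> H; have : x \in filt c s by rewrite H inE eqxx.
by rewrite mem_filter => /andP[]. Qed.

Lemma PE_equiv u v : PE u v -> two_equiv v u.
Proof.
elim: u v => [|x u IH] v H.
  case: v H => [|y v] H; first by exists 0; apply: moves0.
  by have := H y; rewrite /filt /= /pc eqxx.
have xv : x \in v.
  have := H x; rewrite /filt /= /pc eqxx /= => E.
  by apply: (@filt_head x v x (filt x u)); rewrite /filt /pc -E.
have [v1 [v2 [Ev xv1]]] := split_first xv.
have G : forall c, pc c x -> filt c v1 = [::].
  move=> c pcx; have := H c; rewrite Ev /filt filter_cat /= pcx.
  case E: [seq x <- v1 | pc c x] => [|z t] //= [] ez _.
  have : z \in v1 by apply: (@filt_head c v1 z t).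
  by rewrite -ez (negbTE xv1).
have comm : forall y, y \in v1 -> (y.+1 < x) || (x.+1 < y).
  move=> y yv1.
  have := filt_nil (G x _) yv1; rewrite /pc eqxx => /(_ isT) => /norP [ny1 ny2].
  case: x {IH H Ev xv1 xv} G ny1 ny2 => [|x] G ny1 ny2.
    move: ny1 ny2; rewrite /pc; case: y {yv1} => [|[|y]] //.
  have := filt_nil (G x _) yv1; rewrite /pc eqxx orbT => /(_ isT) /norP [ny3 _].
  move: ny1 ny2 ny3; rewrite !(eq_sym y).
  move=> /eqP ? /eqP ? /eqP ?; apply/orP; lia.
have PE' : PE u (v1 ++ v2).
  move=> c; have := H c; rewrite Ev /filt !filter_cat /=.
  case E: (pc c x) => //=; have := G c E; rewrite /filt => -> /= [] //.
have [k Hk] := IH _ PE'.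
exists (size v1 + k); rewrite Ev; apply: moves_trans (moves_shift v2 comm) _.
exact: moves_cons.
Qed.

Lemma filt_iota0 c m k : c.+1 < m -> filt c (iota m k) = [::].
Proof.
elim: k m => [|k IH] m H //=; rewrite /filt /= /pc.
have -> : (m == c) || (m == c.+1) = false by apply/negbTE; apply/norP; split; apply/eqP; lia.
by apply: IH; lia.
Qed.

Lemma filt_iota c m k : m <= c -> c.+1 < m + k -> filt c (iota m k) = [:: c; c.+1].
Proof.
elim: k m => [|k IH] m H1 H2; first lia.
rewrite /= /filt /= /pc.
case: (eqVneq m c) => Hmc; last first.
  have -> : (m == c.+1) = false by apply/negbTE; apply/eqP; lia.
  by apply: IH; lia.
rewrite Hmc /=.
case: k IH H2 => [|k] IH H2; first lia.
rewrite /= eqxx orbT; congr (_ :: _ :: _).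
by apply: filt_iota0.
Qed.

Lemma filt_Dword n c : 0 < c < n -> filt c (Dword n) = [:: c.+1; c].
Proof.
move=> /andP [H1 H2]; rewrite /Dword /filt filter_rev.
by have := filt_iota (m:=1) (k:=n) H1; rewrite /filt => ->; [|lia].
Qed.

Lemma count_Dword n z : count_mem z (Dword n) = (0 < z <= n).
Proof.
rewrite /Dword count_rev count_uniq_mem ?iota_uniq // mem_iota.
by case: z => [|z] //=; rewrite add1n ltnS.
Qed.

Lemma count_filt z s : count_mem z s = count_mem z (filt z s).
Proof.
rewrite /filt count_filter; apply: eq_count => y /=; rewrite /pc.
by case: (eqVneq y z) => [->|] //=; rewrite ?eqxx.
Qed.

Lemma count_filt1 c s : count_mem c.+1 s = count_mem c.+1 (filt c s).
Proof.
rewrite /filt count_filter; apply: eq_count => y /=; rewrite /pc.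
by case: (eqVneq y c.+1) => [->|] //=; rewrite ?eqxx ?orbT.
Qed.

Lemma PE_count u v : PE u v -> forall z, count_mem z u = count_mem z v.
Proof. by move=> H z; rewrite count_filt (H z) -count_filt. Qed.

Lemma filt_nseq1 c X : count_mem c X = 0 -> filt c X = nseq (count_mem c.+1 X) c.+1.
Proof.
elim: X => [|x X IH] //=; rewrite /filt /= /pc.
case: (eqVneq x c) => [->|nxc] //=.
rewrite add0n => /IH; rewrite /filt => ->.
by case: (eqVneq x c.+1) => [->|] //; rewrite ?eqxx.
Qed.

Lemma filt_nseq0 c X : count_mem c.+1 X = 0 -> filt c X = nseq (count_mem c X) c.
Proof.
elim: X => [|x X IH] //=; rewrite /filt /= /pc.
case: (eqVneq x c.+1) => [->|nxc] //=.
rewrite add0n => /IH; rewrite /filt orbF => ->.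
by case: (eqVneq x c) => [->|] //; rewrite ?eqxx.
Qed.

Lemma filt_cnt c X Y : (forall z, count_mem z X = count_mem z Y) ->
  count_mem c X = 0 \/ count_mem c.+1 X = 0 -> filt c X = filt c Y.
Proof.
move=> H [H0|H0].
  by rewrite !filt_nseq1 -?H.
by rewrite !filt_nseq0 -?H.
Qed.

Lemma trich (p q : nat) X Y X' Y' : p != q ->
  X ++ [:: p; q] ++ Y = X' ++ [:: p; q] ++ Y' ->
  (X = X' /\ Y = Y') \/ (exists Z, X = X' ++ [:: p; q] ++ Z) \/
  (exists Z, X' = X ++ [:: p; q] ++ Z).
Proof.
move=> npq; elim: X X' => [|x X IH] [|x' X'] /=.
- by case=> ->; left.
- case: X' => [|b Z] /= [] E0 E1; subst; first by rewrite eqxx in npq.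
  by move=> _; right; right; exists Z.
- case: X IH => [|b Z] _ /= [] E0 E1; subst; first by rewrite eqxx in npq.
  by move=> _; right; left; exists Z.
- case=> -> /IH [[-> ->]|[[Z ->]|[Z ->]]]; [by left|right;left|right;right]; by exists Z.
Qed.

Lemma core n L R A B : 0 < n ->
  (forall z, z \in A -> 0 < z < n) -> (forall z, z \in B -> 1 < z <= n) ->
  PE (L ++ Dword n ++ R) (A ++ Dword n ++ B) -> PE L A /\ PE R B.
Proof.
move=> n0 HA HB H.
have Hc := PE_count H.
have cA z : ~~ (0 < z < n) -> count_mem z A = 0.
  move=> Hz; apply/count_memPn; apply/negP => /HA; by rewrite (negbTE Hz).
have cB z : ~~ (1 < z <= n) -> count_mem z B = 0.
  move=> Hz; apply/count_memPn; apply/negP => /HB; by rewrite (negbTE Hz).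
have cLR z : ~~ (0 < z <= n) -> count_mem z L = 0 /\ count_mem z R = 0.
  move=> Hz; have := Hc z; rewrite !count_cat count_Dword (negbTE Hz) cA ?cB //.
    by lia.
  by move: Hz; apply: contra => /andP [] *; apply/andP; split; lia.
  by move: Hz; apply: contra => /andP [] *; apply/andP; split; lia.
have T c : 0 < c < n ->
   (filt c L = filt c A /\ filt c R = filt c B) \/
   (count_mem c L < count_mem c A /\ count_mem c.+1 L < count_mem c.+1 A) \/
   (count_mem c A < count_mem c L /\ count_mem c.+1 A < count_mem c.+1 L).
  move=> Hcn.
  have E : filt c L ++ [:: c.+1; c] ++ filt c R = filt c A ++ [:: c.+1; c] ++ filt c B.
    by have := H c; rewrite /filt !filter_cat; have := filt_Dword Hcn; rewrite /filt => ->.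
  have npq : c.+1 != c by apply/eqP; lia.
  have nc : (c.+1 == c) = false by apply/negbTE.
  rewrite (count_filt c L) (count_filt c A) (count_filt1 c L) (count_filt1 c A).
  case: (trich npq E) => [[-> ->]|[[Z ->]|[Z ->]]].
  - by left.
  - by right; right; rewrite !count_cat /= nc !eqxx; lia.
  - by right; left; rewrite !count_cat /= nc !eqxx; lia.
have ltn0 : ~~ (count_mem n L < count_mem n A) by rewrite cA ?ltnn //; apply/negP => /andP []; lia.
have gt1 : ~~ (count_mem 1 A < count_mem 1 L).
  have := Hc 1; rewrite !count_cat count_Dword cB //= n0 => E; rewrite -leqNgt; lia.
have noLT : forall m c, 0 < c -> c + m = n -> ~~ (count_mem c L < count_mem c A).
  elim=> [|m IH] c c0 Hcm; first by rewrite addn0 in Hcm; rewrite Hcm.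
  have Hcn : 0 < c < n by apply/andP; split; lia.
  have := IH c.+1 isT; rewrite addSnnS => /(_ Hcm) IH1.
  case: (T c Hcn) => [[E1 _]|[[_ H2]|[H1 _]]].
  - by rewrite (count_filt c L) (count_filt c A) E1 ltnn.
  - by rewrite H2 in IH1.
  - by rewrite -leqNgt ltnW.
have noGT : forall c, 0 < c <= n -> ~~ (count_mem c A < count_mem c L).
  elim=> [|c IH] //; case: c IH => [|c] IH Hc1; first by [].
  have Hcn : 0 < c.+1 < n by apply/andP; split; lia.
  have IH1 := IH (ltac:(apply/andP; split; lia)).
  case: (T c.+1 Hcn) => [[E1 _]|[[_ H2]|[H1 _]]].
  - by rewrite (count_filt1 c.+1 L) (count_filt1 c.+1 A) E1 ltnn.
  - by rewrite -leqNgt ltnW.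
  - by rewrite H1 in IH1.
have EQ c : 0 < c < n -> filt c L = filt c A /\ filt c R = filt c B.
  move=> Hcn; case: (T c Hcn) => [//|[[H1 _]|[H1 _]]].
  - by have := noLT (n - c) c (ltac:(lia)) (ltac:(lia)); rewrite H1.
  - by have := noGT c (ltac:(apply/andP; split; lia)); rewrite H1.
have cntL z : count_mem z L = count_mem z A.
  case: (boolP (0 < z <= n)) => Hz.
    have := noLT (n - z) z (ltac:(lia)) (ltac:(lia)).
    have := noGT z Hz; lia.
  rewrite (cLR z Hz).1 cA //; apply: contra Hz => /andP [] *; apply/andP; split; lia.
have cntR z : count_mem z R = count_mem z B.
  by have := Hc z; rewrite !count_cat cntL; lia.
split => c.
- case: (boolP (0 < c < n)) => Hc'; first exact: (EQ c Hc').1.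
  apply: filt_cnt => //.
  case: c Hc' => [|c] Hc'; first by left; apply: (cLR 0 isT).1.
  right; apply: (cLR c.+2 _).1; apply/negP => /andP [] *; move: Hc'; rewrite /=; lia.
- case: (boolP (0 < c < n)) => Hc'; first exact: (EQ c Hc').2.
  apply: filt_cnt => //.
  case: c Hc' => [|c] Hc'; first by left; apply: (cLR 0 isT).2.
  right; apply: (cLR c.+2 _).2; apply/negP => /andP [] *; move: Hc'; rewrite /=; lia.
Qed.

Lemma PE_sym u v : PE u v -> PE v u.
Proof. by move=> H c. Qed.

Lemma PE_trans u v w : PE u v -> PE v w -> PE u w.
Proof. by move=> H1 H2 c; rewrite H1 H2. Qed.

Lemma PE_cat a a' b b' : PE a a' -> PE b b' -> PE (a ++ b) (a' ++ b').
Proof. by move=> H1 H2 c; rewrite /filt !filter_cat -!/(filt c _) H1 H2. Qed.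

Lemma PE_rev u v : PE u v -> PE (rev u) (rev v).
Proof. by move=> H c; rewrite /filt !filter_rev -!/(filt c _) H. Qed.

Lemma PE_size u v : PE u v -> size u = size v.
Proof.
move=> H; apply: perm_size; apply/allP => x _; apply/eqP; exact: PE_count.
Qed.

Lemma core_A n L R A B : 0 < n ->
  (forall z, z \in A -> 1 < z <= n) -> (forall z, z \in B -> 0 < z < n) ->
  PE (L ++ Aword n ++ R) (A ++ Aword n ++ B) -> PE L A /\ PE R B.
Proof.
move=> n0 HA HB H.
have H' : PE (rev R ++ Dword n ++ rev L) (rev B ++ Dword n ++ rev A).
  by have := PE_rev H; rewrite !rev_cat catA catA.
have [H1 H2] := core n0 (fun z => (HB z) \o (fun h => (etrans (esym (mem_rev B z)) h)))
  (fun z => (HA z) \o (fun h => (etrans (esym (mem_rev A z)) h))) H'.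
by split; [have := PE_rev H2 | have := PE_rev H1]; rewrite !revK.
Qed.

Lemma PE_shiftdown r b : PE r (shiftup b) -> PE (shiftdown r) b.
Proof.
move=> H c.
have r0 : 0 \notin r.
  apply/count_memPn; rewrite (PE_count H); apply/count_memPn.
  by apply/mapP => [[y _]].
rewrite /filt /shiftdown filter_map.
rewrite (@eq_in_filter _ _ (pc c.+1)); last first.
  move=> z zr /=; case: z zr => [|z] zr //; by rewrite zr in r0.
have := H c.+1; rewrite /filt /shiftup => ->.
rewrite filter_map (@eq_filter _ _ (pc c)) //.
by rewrite (mapK succnK).
Qed.

Lemma iword_aux_rcons k ds Is w d s : size ds = size Is ->
  iword_aux k (rcons ds d) (rcons Is s) w = ext d s (k + size ds) (iword_aux k ds Is w).
Proof.
elim: ds k Is w => [|d' ds IH] k [|s' Is] w //=; first by rewrite addn0.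
by case=> E; rewrite IH // addSnnS.
Qed.

Lemma size_take_drop (w : seq nat) m : size (take m w) + size (drop m w) = size w.
Proof. by rewrite -size_cat cat_take_drop. Qed.

Lemma size_ext d s k w : size (ext d s k w) = size w + k.
Proof.
case: d; rewrite /ext !size_cat /shiftup size_map ?size_rev size_iota;
  have := size_take_drop w (size w - s); lia.
Qed.

Lemma ext_letters d s k w : (forall z, z \in w -> 0 < z <= k) ->
  forall z, z \in ext d s k.+1 w -> 0 < z <= k.+1.
Proof.
move=> H z; case: d; rewrite /ext !mem_cat /Aword /Dword ?mem_rev mem_iota.
- case/orP => [/mapP [y /mem_take /H Hy ->]|/orP [|/mem_drop /H]] /=; lia.
- case/orP => [/mem_take /H|/orP [|/mapP [y /mem_drop /H Hy ->]]] /=; lia.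
Qed.

Lemma iword_prop ds Is k w : size ds = size Is ->
  size w * 2 = k.+1 * k -> (forall z, z \in w -> 0 < z <= k) ->
  size (iword_aux k.+1 ds Is w) * 2 = (k + size ds).+1 * (k + size ds) /\
  (forall z, z \in iword_aux k.+1 ds Is w -> 0 < z <= k + size ds).
Proof.
elim: ds Is k w => [|d ds IH] [|s Is] k w //=; first by rewrite addn0.
case=> Hs Hw Hl.
have := IH Is k.+1 (ext d s k.+1 w) Hs.
rewrite addSnnS size_ext; apply.
  nia.
exact: ext_letters.
Qed.

Lemma ex_min (P : nat -> Prop) : (exists k, P k) ->
  exists k, P k /\ forall k', P k' -> k <= k'.
Proof.
move=> [k Pk].
suff : forall m k, k <= m -> P k -> exists k, P k /\ forall k', P k' -> k <= k'.
  by move=> /(_ k k (leqnn k) Pk).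
elim=> [|m IH] k0 Hk Pk0.
  by exists k0; split => // k' _; lia.
case: (Classical_Prop.classic (exists k', k' < k0 /\ P k')) => [[k' [Hk' Pk']]|NE].
  by apply: (IH k') => //; lia.
exists k0; split => // k' Pk'; rewrite leqNgt; apply/negP => Hlt.
by apply: NE; exists k'.
Qed.

Lemma key d n s w' u l r : s <= size w' -> (forall z, z \in w' -> 0 < z <= n) ->
  PE u (ext d s n.+1 w') -> u = l ++ pat d n.+1 ++ r ->
  size r = s /\ PE (contract d l r) w'.
Proof.
move=> Hs Hl H Eu; subst u.
have Hsz : size (drop (size w' - s) w') = s by rewrite size_drop; lia.
case: d H => /= H.
- have [H1 H2] := core_A (n:=n.+1) (L:=l) (R:=r) (A:=shiftup (take (size w' - s) w'))
     (B:=drop (size w' - s) w') isT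
     (fun z => fun h => match (mapP h) with ex_intro2 y hy e =>
        (ltac:(move: (Hl y (mem_take hy)); rewrite e; lia)) end)
     (fun z => fun h => (ltac:(move: (Hl z (mem_drop h)); lia))) H.
  split; first by rewrite (PE_size H2).
  by rewrite -(cat_take_drop (size w' - s) w'); apply: PE_cat (PE_shiftdown H1) H2.
- have [H1 H2] := core (n:=n.+1) (L:=l) (R:=r) (A:=take (size w' - s) w')
     (B:=shiftup (drop (size w' - s) w')) isT
     (fun z => fun h => (ltac:(move: (Hl z (mem_take h)); lia)))
     (fun z => fun h => match (mapP h) with ex_intro2 y hy e =>
        (ltac:(move: (Hl y (mem_drop hy)); rewrite e; lia)) end) H.
  split; first by rewrite (PE_size H2) /shiftup size_map.
  by rewrite -(cat_take_drop (size w' - s) w'); apply: PE_cat H1 (PE_shiftdown H2).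
Qed.

Lemma PE_nil i : PE i [::] -> i = [::].
Proof. case: i => [|y i] // H; by have := H y; rewrite /filt /= /pc eqxx. Qed.

Lemma main n : forall delta I, size delta = n -> size I = n ->
  (forall j, j < n -> nth 0 I j <= (j.+1 * j) %/ 2) ->
  forall i, PE i (iword delta I) ->
  ind_delta delta I i /\ (forall J, ind_delta delta J i -> J = I).
Proof.
elim: n => [|n IH] delta I.
  move=> /size0nil -> /size0nil -> _ i /PE_nil ->; split => // J.
  rewrite /ind_delta /=; case E: (rev J) => [|s Is] // _.
  by rewrite -(revK J) E.
case/lastP: delta => [|delta' d] //; case/lastP: I => [|I' s] //.
rewrite !size_rcons => [[Hd]] [HI] Hb i Hi.
have Hb' : forall j, j < n -> nth 0 I' j <= (j.+1 * j) %/ 2.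
  move=> j Hj; have := Hb j (ltnW Hj); by rewrite nth_rcons HI Hj.
have Hsn : s <= (n.+1 * n) %/ 2.
  by have := Hb n (ltnSn n); rewrite nth_rcons HI ltnn eqxx.
have IH' := IH delta' I' Hd HI Hb'.
set w' := iword delta' I'.
have [Hsz Hl] : size w' * 2 = n.+1 * n /\ (forall z, z \in w' -> 0 < z <= n).
  have := @iword_prop delta' I' 0 [::] (etrans Hd (esym HI)) erefl (fun z => fun h => (ltac:(by []))).
  by rewrite add0n Hd.
have Hs : s <= size w' by rewrite -(mulnK (size w') (isT : 0 < 2)) Hsz.
have Ew : iword (rcons delta' d) (rcons I' s) = ext d s n.+1 w'.
  by rewrite /iword iword_aux_rcons ?Hd ?HI.
rewrite Ew in Hi.
split.
- have [k0 Hk0] : two_equiv i (ext d s n.+1 w') by apply: PE_equiv; apply: PE_sym.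
  have := @ex_min (fun k => exists l r, moves k i (l ++ pat d n.+1 ++ r)).
  case.
    exists k0; case: d Hk0 {Hi Ew} => /= Hk0.
    + by exists (shiftup (take (size w' - s) w')), (drop (size w' - s) w').
    + by exists (take (size w' - s) w'), (shiftup (drop (size w' - s) w')).
  move=> k [[l [r Hm]] Hmin].
  have HPE : PE (l ++ pat d n.+1 ++ r) (ext d s n.+1 w').
    exact: PE_trans (PE_sym (moves_PE Hm)) Hi.
  have [Hr Hc] := key Hs Hl HPE erefl.
  rewrite /ind_delta !rev_rcons.
  have -> : ind_rev [:: d & rev delta'] [:: s & rev I'] i =
    exists l r, [/\ min_decomp d n.+1 i l r, size r = s &
                      ind_rev (rev delta') (rev I') (contract d l r)] by rewrite /= size_rev Hd.
  exists l, r; split => //.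
    exists k; split => // l' r' k' Hm'; apply: Hmin; by exists l', r'.
  exact: (IH' _ (PE_trans Hc (fun c => erefl))).1.
- move=> J; rewrite /ind_delta rev_rcons.
  case E: (rev J) => [|s' Is] //.
  rewrite /= size_rev Hd => [[l [r [[k [Hm _]] Hr Hind]]]].
  have HPE : PE (l ++ pat d n.+1 ++ r) (ext d s n.+1 w').
    exact: PE_trans (PE_sym (moves_PE Hm)) Hi.
  have [Hr' Hc] := key Hs Hl HPE erefl.
  have := (IH' _ Hc).2 (rev Is); rewrite /ind_delta revK => /(_ Hind) EI.
  by rewrite -(revK J) E rev_cons EI -Hr' Hr.
Qed.

Theorem lemma4p10 (n : nat) (delta : seq AD) (I : seq nat) (i : seq nat) :
  size delta = n ->
  size I = n ->
  (* I_j \in [0, j(j-1)/2] for j = 1..n  (0-indexed: nth j, j < n) *)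
  (forall j, j < n -> nth 0 I j <= (j.+1 * j) %/ 2) ->
  reduced_w0 n i ->
  two_equiv i (iword delta I) ->
  ind_delta delta I i /\ (forall J, ind_delta delta J i -> J = I).
Proof.
move=> Hd HI Hb _ [k Hk].
exact: (main Hd HI Hb (moves_PE Hk)).
Qed.
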